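(* Let $K$ be a field of characteristic $p>0$ such that $K/k$ is a finitely generated field extension, where $k=\bigcap_{n\ge0}K^{p^n}$. There is a bijection between power towers on $K$ and $K$-subalgebras $\mathcal{D}$ with $K\subseteq\mathcal{D}\subseteq\operatorname{Diff}_k(K)$, given by $W_\bullet\mapsto\operatorname{Diff}_{W_\bullet}(K):=\bigcup_{n\ge0}\operatorname{Diff}_{W_n}(K)$, with inverse $\mathcal{D}\mapsto(W_n)_{n\ge 0}$, $W_n=\{x\in K: xE=Ex\ \forall E\in\mathcal{D}_n\}$, where $\mathcal{D}_n=\mathcal{D}\cap\operatorname{Diff}_{K^{p^n}}(K)$. Moreover, $\dim_K(\mathcal{D}_i)=\dim_{W_i}(K)$ for all $i\ge 0$.
   Context: A power tower on $K$ is a sequence of subfields $W_0,W_1,\ldots$ of $K$ with $W_j=W_i\cdot K^{p^j}$ whenever $j\le i$ ($\cdot$ = compositum in $K$). For subfields $A\subseteq B$, $\operatorname{Diff}_A(B)$ is the union over $n\ge0$ of the sets of $A$-linear maps $D:B\to B$ with $[b_0,[b_1,[\ldots,[b_n,D]\ldots]]]=0$ for all $b_i\in B$ (elements of $B$ acting by multiplication, $[X,Y]=XY-YX$); it is a subalgebra of $\operatorname{End}_A(B)$ containing $B$. *)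

(* Defs.v *)
From mathcomp Require Import all_boot all_algebra.
Set Implicit Arguments. Unset Strict Implicit. Unset Printing Implicit Defensive.
Import GRing.Theory.
Local Open Scope ring_scope.

Section PowerTowers.
Variable K : fieldType.

Definition is_subfield (S : K -> Prop) : Prop :=
  [/\ S 0, S 1,
      (forall x y, S x -> S y -> S (x - y)),
      (forall x y, S x -> S y -> S (x * y)) &
      (forall x, S x -> S x^-1)].

Definition gen_field (A : K -> Prop) : K -> Prop :=
  fun x => forall S, is_subfield S -> (forall y, A y -> S y) -> S x.

Definition compositum (A B : K -> Prop) : K -> Prop :=
  gen_field (fun y => A y \/ B y).

Definition Kpow (p n : nat) : K -> Prop :=
  fun x => exists y : K, x = y ^+ (p ^ n)%N.

Definition perfect_core (p : nat) : K -> Prop :=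
  fun x => forall n, Kpow p n x.

Definition fin_gen_over (A : K -> Prop) : Prop :=
  exists s : seq K, forall x, gen_field (fun y => A y \/ y \in s) x.

Definition power_tower (p : nat) (W : nat -> K -> Prop) : Prop :=
  (forall i, is_subfield (W i)) /\
  (forall i j, (j <= i)%N -> W j = compositum (W i) (Kpow p j)).

Definition commb (b : K) (D : K -> K) : K -> K := fun x => b * D x - D (b * x).

Fixpoint diff_order (n : nat) (D : K -> K) : Prop :=
  match n with
  | 0 => forall b x, commb b D x = 0
  | n'.+1 => forall b, diff_order n' (commb b D)
  end.

Definition A_linear (A : K -> Prop) (D : K -> K) : Prop :=
  (forall x y, D (x + y) = D x + D y) /\ (forall a x, A a -> D (a * x) = a * D x).

Definition Diff (A : K -> Prop) : (K -> K) -> Prop :=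
  fun D => A_linear A D /\ exists n, diff_order n D.

Definition Diff_tower (W : nat -> K -> Prop) : (K -> K) -> Prop :=
  fun D => exists n, Diff (W n) D.

Definition admissible_alg (p : nat) (D : (K -> K) -> Prop) : Prop :=
  [/\ (forall c : K, D (fun x => c * x)),
      (forall E F, D E -> D F -> D (fun x => E x + F x)),
      (forall E F, D E -> D F -> D (fun x => E (F x))),
      (forall (c : K) E, D E -> D (fun x => c * E x)) &
      (forall E, D E -> Diff (perfect_core p) E)].

Definition alg_level (p : nat) (D : (K -> K) -> Prop) (n : nat) : (K -> K) -> Prop :=
  fun E => D E /\ Diff (Kpow p n) E.

Definition tower_of_alg (p : nat) (D : (K -> K) -> Prop) : nat -> K -> Prop :=
  fun n x => forall E, alg_level p D n E -> forall y, x * E y = E (x * y).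

Definition op_dim (S : (K -> K) -> Prop) (n : nat) : Prop :=
  exists e : 'I_n -> (K -> K),
    [/\ (forall j, S (e j)),
        (forall c : 'I_n -> K,
            (forall x, \sum_(j < n) c j * e j x = 0) -> forall j, c j = 0) &
        (forall E, S E -> exists c : 'I_n -> K,
            forall x, E x = \sum_(j < n) c j * e j x)].

Definition field_dim (W : K -> Prop) (n : nat) : Prop :=
  exists e : 'I_n -> K,
    (forall c : 'I_n -> K, (forall j, W (c j)) ->
        \sum_(j < n) c j * e j = 0 -> forall j, c j = 0) /\
    (forall x, exists c : 'I_n -> K,
        (forall j, W (c j)) /\ x = \sum_(j < n) c j * e j).

End PowerTowers.

(* Main.v *)
Require Import Defs.
From mathcomp Require Import all_boot all_algebra.
From mathcomp Require Import ring zify.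
From Stdlib Require Import FunctionalExtensionality PropExtensionality ClassicalEpsilon Classical.
Set Implicit Arguments. Unset Strict Implicit. Unset Printing Implicit Defensive.
Import GRing.Theory.
Local Open Scope ring_scope.

Section Main.
Variable K : fieldType.
Variable p : nat.
Hypothesis hp : p \in [pchar K].

Local Notation Kp n := (@Kpow K p n).
Local Notation dord := (@diff_order K).

Lemma p_prime : prime p. Proof. exact: pcharf_prime hp. Qed.
Lemma p_gt0 : (0 < p)%N. Proof. exact: prime_gt0 p_prime. Qed.
Lemma pK0 : (p%:R : K) = 0. Proof. exact: pcharf0 hp. Qed.
Lemma pnat_p : [pchar K].-nat p. Proof. by rewrite pnatE ?p_prime. Qed.

Definition additive (E : K -> K) := forall x y, E (x + y) = E x + E y.

Lemma add0 E : additive E -> E 0 = 0.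
Proof. move=> h; have := h 0 0; rewrite addr0 -{1}[E 0]addr0 => /addrI; by move<-. Qed.
Lemma addN E : additive E -> forall x, E (- x) = - E x.
Proof. move=> h x; apply/eqP; rewrite -subr_eq0 opprK -h addNr add0 //. Qed.
Lemma addB E : additive E -> forall x y, E (x - y) = E x - E y.
Proof. by move=> h x y; rewrite h addN. Qed.

Section SF.
Variable S : K -> Prop.
Hypothesis hS : is_subfield S.
Lemma sf0 : S 0. Proof. by case: hS. Qed.
Lemma sf1 : S 1. Proof. by case: hS. Qed.
Lemma sfB x y : S x -> S y -> S (x - y). Proof. by case: hS => _ _ h _ _; apply: h. Qed.
Lemma sfM x y : S x -> S y -> S (x * y). Proof. by case: hS => _ _ _ h _; apply: h. Qed.
Lemma sfV x : S x -> S x^-1. Proof. by case: hS => _ _ _ _ h; apply: h. Qed.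
Lemma sfN x : S x -> S (- x). Proof. by move=> h; rewrite -sub0r; apply: sfB => //; apply: sf0. Qed.
Lemma sfD x y : S x -> S y -> S (x + y).
Proof. by move=> hx hy; rewrite -[y]opprK; apply: sfB => //; apply: sfN. Qed.
Lemma sfX x n : S x -> S (x ^+ n).
Proof. move=> hx; elim: n => [|n IH]; first exact: sf1. by rewrite exprS; apply: sfM. Qed.
Lemma sf_sum (I : Type) (r : seq I) (P : pred I) (F : I -> K) :
  (forall i, P i -> S (F i)) -> S (\sum_(i <- r | P i) F i).
Proof. move=> h; apply: (big_ind S) => //; [exact: sf0 | exact: sfD]. Qed.
Lemma sf_nat n : S n%:R.
Proof. elim: n => [|n IH]; first exact: sf0. by rewrite -addn1 natrD; apply: sfD => //; apply: sf1. Qed.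
End SF.

Lemma gen_field_sf (A : K -> Prop) : is_subfield (gen_field A).
Proof.
split.
- by move=> S hS _; apply: sf0.
- by move=> S hS _; apply: sf1.
- by move=> x y hx hy S hS hA; apply: sfB => //; [apply: hx|apply: hy].
- by move=> x y hx hy S hS hA; apply: sfM => //; [apply: hx|apply: hy].
- by move=> x hx S hS hA; apply: sfV => //; apply: hx.
Qed.
Lemma gen_field_in (A : K -> Prop) x : A x -> gen_field A x.
Proof. by move=> hx S hS hA; apply: hA. Qed.
Lemma gen_field_min (A S : K -> Prop) : is_subfield S -> (forall y, A y -> S y) ->
  forall x, gen_field A x -> S x.
Proof. by move=> hS hA x hx; apply: hx. Qed.

Lemma Kpow_sf n : is_subfield (Kp n).
Proof.
have pn : [pchar K].-nat (p ^ n)%N by rewrite pnatX pnat_p.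
have q0 : (0 < p ^ n)%N by rewrite expn_gt0 p_gt0.
split.
- by exists 0; rewrite expr0n eqn0Ngt q0.
- by exists 1; rewrite expr1n.
- move=> _ _ [x ->] [y ->]; exists (x - y).
  by rewrite exprDn_pchar // exprNn_pchar.
- by move=> _ _ [x ->] [y ->]; exists (x * y); rewrite exprMn.
- by move=> _ [x ->]; exists x^-1; rewrite exprVn.
Qed.

Lemma Kpow_mono m n : (m <= n)%N -> forall x, Kp n x -> Kp m x.
Proof.
move=> lmn _ [y ->]; exists (y ^+ (p ^ (n - m))).
by rewrite -exprM -expnD subnK.
Qed.

Lemma Kpow0 x : Kp 0 x. Proof. by exists x; rewrite expn0 expr1. Qed.

Lemma linset_sf E : additive E -> is_subfield (fun a => forall x, E (a * x) = a * E x).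
Proof.
move=> hE; split.
- by move=> x; rewrite !mul0r add0.
- by move=> x; rewrite !mul1r.
- by move=> a b ha hb x; rewrite mulrBl addB // ha hb mulrBl.
- by move=> a b ha hb x; rewrite -mulrA ha hb mulrA.
- move=> a ha x; have [->|a0] := eqVneq a 0; first by rewrite invr0 !mul0r add0.
  apply: (mulfI a0); rewrite -ha mulrA divff // mul1r mulrA divff // mul1r //.
Qed.

Lemma lin_gen E (A : K -> Prop) : additive E ->
  (forall a, A a -> forall x, E (a * x) = a * E x) ->
  forall a, gen_field A a -> forall x, E (a * x) = a * E x.
Proof. move=> hE hA a ha; exact: (gen_field_min (linset_sf hE) hA ha). Qed.

Lemma do_zero n : dord n (fun _ : K => 0).
Proof.
elim: n => [|n IH] /=; first by move=> b x; rewrite /commb mulr0 subr0.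
move=> b; have -> : commb b (fun _ : K => 0) = (fun _ => 0) by apply: functional_extensionality => x; rewrite /commb mulr0 subr0.
exact: IH.
Qed.

Lemma do_mono n D : dord n D -> dord n.+1 D.
Proof.
elim: n D => [|n IH] D /= h b.
  move=> b' x; have e1 := h b x; have e2 := h b (b' * x).
  by rewrite /commb in e1 e2 *; rewrite e1 e2 mulr0 subr0.
exact: IH.
Qed.

Lemma do_le m n D : (m <= n)%N -> dord m D -> dord n D.
Proof.
move=> /subnK <-; elim: (n - m)%N => [|k IH] // h; rewrite addSn; exact: do_mono (IH h).
Qed.

Lemma do_add n D D' : dord n D -> dord n D' -> dord n (fun x => D x + D' x).
Proof.
elim: n D D' => [|n IH] D D' /= h h' b.
  by move=> x; move: (h b x) (h' b x); rewrite /commb => /eqP; rewrite subr_eq0 => /eqP e1 /eqP; rewrite subr_eq0 => /eqP e2; rewrite mulrDr e1 e2 subrr.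
have -> : commb b (fun x => D x + D' x) = (fun x => commb b D x + commb b D' x).
  by apply: functional_extensionality => x; rewrite /commb mulrDr opprD addrACA.
exact: IH.
Qed.

Lemma do_scal n D c : dord n D -> dord n (fun x => c * D x).
Proof.
elim: n D => [|n IH] D /= h b.
  by move=> x; move: (h b x); rewrite /commb mulrCA -mulrBr => ->; rewrite mulr0.
have -> : commb b (fun x => c * D x) = (fun x => c * commb b D x).
  by apply: functional_extensionality => x; rewrite /commb mulrBr mulrCA.
exact: IH.
Qed.

Lemma commb_add b E : additive E -> additive (commb b E).
Proof. by move=> h x y; rewrite /commb mulrDr !h mulrDr opprD addrACA. Qed.

Lemma do_comp N : forall m k E F, (m + k = N)%N -> additive E -> additive F ->
  dord m E -> dord k F -> dord N (fun x => E (F x)).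
Proof.
have key : forall b (E F : K -> K), additive E ->
   commb b (fun x => E (F x)) = (fun x => commb b E (F x) + E (commb b F x)).
  move=> b E F hE; apply: functional_extensionality => x.
  by rewrite /commb addB // addrA subrK.
elim: N => [|N IH] m k E F hN hE hF dE dF.
  move: hN => /eqP; rewrite addn_eq0 => /andP [/eqP m0 /eqP k0]; subst m k.
  by move=> /= b x; rewrite key //= dE dF add0 // addr0.
move=> b /=; rewrite key //; apply: do_add.
- case: m hN dE => [|m] hN dE /=.
    have -> : (fun x => commb b E (F x)) = (fun _ => 0) by apply: functional_extensionality => x; apply: dE.
    exact: do_zero.
  apply: (IH m k) => //; first by move: hN; rewrite addSn => -[].
  exact: commb_add.
- case: k hN dF => [|k] hN dF /=.
    have -> : (fun x => E (commb b F x)) = (fun _ => 0) by apply: functional_extensionality => x; rewrite dF add0.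
    exact: do_zero.
  apply: (IH m k) => //; first by move: hN; rewrite addnS => -[].
  exact: commb_add.
Qed.

Lemma do_lin m D : dord m D -> forall y x, D (y ^+ (p ^ m) * x) = y ^+ (p ^ m) * D x.
Proof.
elim: m D => [|m IH] D /= h y x.
  by rewrite expn0 expr1; move: (h y x); rewrite /commb => /eqP; rewrite subr_eq0 => /eqP ->.
set c := y ^+ (p ^ m).
have IH' : forall b x, commb b D (c * x) = c * commb b D x by move=> b x'; apply: IH.
set G := commb c D.
have GK : forall b x, G (b * x) = b * G x.
  move=> b z; have := IH' b z; rewrite /G /commb => e.
  apply/eqP; rewrite -subr_eq0; apply/eqP.
  have e2 : D (b * (c * z)) = b * D (c * z) - c * (b * D z - D (b * z)).
    by rewrite -e opprB addrC subrK.
  rewrite (mulrCA c b) e2; ring.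
have pw : forall k z, c ^+ k.+1 * D z - D (c ^+ k.+1 * z) = k.+1%:R * c ^+ k * G z.
  move=> k z; elim: k => [|k IHk]; first by rewrite expr1 expr0 mulr1 mul1r.
  have e3 := GK (c ^+ k.+1) z; rewrite /G /commb in e3.
  have e4 : D (c ^+ k.+2 * z) = c * D (c ^+ k.+1 * z) - c ^+ k.+1 * G z.
    by rewrite -e3 exprS -mulrA; ring.
  rewrite e4; have e5 : c ^+ k.+2 * D z - (c * D (c ^+ k.+1 * z) - c ^+ k.+1 * G z)
     = c * (c ^+ k.+1 * D z - D (c ^+ k.+1 * z)) + c ^+ k.+1 * G z by rewrite exprS; ring.
  rewrite e5 IHk -[in RHS](addn1 k.+1) natrD exprS; ring.
have := pw p.-1 x; rewrite prednK ?p_gt0 // pK0 !mul0r => /eqP; rewrite subr_eq0 => /eqP.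
by rewrite -exprM -expnSr.
Qed.

Lemma Diff_Kpow (A : K -> Prop) D : Diff A D -> exists m, forall y x, D (y ^+ (p ^ m) * x) = y ^+ (p ^ m) * D x.
Proof. by case=> _ [m hm]; exists m; apply: do_lin. Qed.


Lemma iter_commb j t (D : K -> K) x :
  iter j (commb t) D x =
  \sum_(0 <= i < j.+1) (-1) ^+ i * 'C(j, i)%:R * t ^+ (j - i) * D (t ^+ i * x).
Proof.
elim: j x => [|j IH] x.
  rewrite big_nat1 /=. by rewrite !expr0 bin0 !mul1r.
rewrite iterS {1}/commb !IH.
set u := fun i : nat => (-1) ^+ i.+1 * 'C(j, i.+1)%:R * t ^+ (j - i) * D (t ^+ i.+1 * x).
set h := fun i : nat => (-1) ^+ i * 'C(j, i)%:R * t ^+ (j - i) * D (t ^+ i * (t * x)).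
have eR : \sum_(0 <= i < j.+2) (-1) ^+ i * 'C(j.+1, i)%:R * t ^+ (j.+1 - i) * D (t ^+ i * x)
   = t ^+ j.+1 * D x + \sum_(0 <= i < j.+1) (u i - h i).
  rewrite big_nat_recl // !expr0 bin0 subn0 !mul1r; congr (_ + _).
  apply: eq_big_nat => i _ /=; rewrite /u /h binS natrD subSS exprS [t ^+ i.+1]exprSr -(mulrA _ t x); ring.
rewrite eR sumrB [\sum_(0 <= i < j.+1) u i]big_nat_recr //=.
have -> : u j = 0 by rewrite /u bin_small // mulr0 !mul0r.
rewrite addr0.
have eL : t * \sum_(0 <= i < j.+1) (-1) ^+ i * 'C(j, i)%:R * t ^+ (j - i) * D (t ^+ i * x)
   = t ^+ j.+1 * D x + \sum_(0 <= i < j) u i.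
  rewrite mulr_sumr big_nat_recl //; congr (_ + _).
    by rewrite !subn0 bin0 !expr0 mul1r mul1r exprS; ring.
  apply: eq_big_nat => i /andP [_ hi]; rewrite /u subnS -[in RHS](prednK (n := (j - i)%N)) ?subn_gt0 //.
  by rewrite [t ^+ (j - i).-1.+1]exprS; ring.
by rewrite eL addrA.
Qed.


Lemma dvdp_nat0 n : (p %| n)%N -> (n%:R : K) = 0.
Proof. by move=> /divnK <-; rewrite natrM pK0 mulr0. Qed.

Lemma iter_p t (D : K -> K) x : iter p (commb t) D x = commb (t ^+ p) D x.
Proof.
rewrite iter_commb big_nat_recr //= subnn expr0 binn.
have -> : (-1) ^+ p = - 1 :> K by rewrite exprNn_pchar ?pnat_p // expr1n.
rewrite big_ltn ?p_gt0 // subn0 bin0 !expr0 !mul1r mulr1 mulN1r.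
rewrite big1_seq ?add0r; last first.
  move=> i; rewrite mem_iota add1n subn1 prednK ?p_gt0 // => /and3P [_ hi1 hi2].
  rewrite dvdp_nat0 ?mulr0 ?mul0r //; rewrite prime_dvd_bin ?p_prime //.
  by rewrite hi1.
by rewrite /commb addr0 mulN1r.
Qed.

Lemma iter_pn n : forall t (D : K -> K) x, iter (p ^ n) (commb t) D x = commb (t ^+ (p ^ n)) D x.
Proof.
elim: n => [|n IH] t D x; first by rewrite expn0 expr1.
rewrite expnSr iterM.
have -> : iter p (commb t) = commb (t ^+ p).
  by apply: functional_extensionality => G; apply: functional_extensionality => y; apply: iter_p.
by rewrite IH -exprM mulnC.
Qed.


Fixpoint span (W : K -> Prop) (l : seq K) (x : K) : Prop :=
  match l with
  | [::] => x = 0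
  | a :: l' => exists c, W c /\ span W l' (x - c * a)
  end.

Section Span.
Variable W : K -> Prop.
Hypothesis hW : is_subfield W.

Lemma span0 l : span W l 0.
Proof. elim: l => [|a l IH] //=; exists 0; split; [exact: sf0|by rewrite mul0r subr0]. Qed.

Lemma spanD l x y : span W l x -> span W l y -> span W l (x + y).
Proof.
elim: l x y => [|a l IH] x y /=; first by move=> -> ->; rewrite addr0.
move=> [c [hc sx]] [d [hd sy]]; exists (c + d); split; first exact: sfD.
have -> : x + y - (c + d) * a = (x - c * a) + (y - d * a) by ring.
exact: IH.
Qed.

Lemma spanZ l c x : W c -> span W l x -> span W l (c * x).
Proof.
move=> hc; elim: l x => [|a l IH] x /=; first by move=> ->; rewrite mulr0.
move=> [d [hd sx]]; exists (c * d); split; first exact: sfM.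
have -> : c * x - c * d * a = c * (x - d * a) by ring.
exact: IH.
Qed.

Lemma spanN l x : span W l x -> span W l (- x).
Proof. by move=> h; rewrite -mulN1r; apply: spanZ => //; apply: sfN => //; apply: sf1. Qed.

Lemma spanB l x y : span W l x -> span W l y -> span W l (x - y).
Proof. by move=> hx hy; apply: spanD => //; apply: spanN. Qed.

Lemma span_sum l (I : Type) (r : seq I) (P : pred I) (F : I -> K) :
  (forall i, P i -> span W l (F i)) -> span W l (\sum_(i <- r | P i) F i).
Proof. move=> h; apply: (big_ind (span W l)) => //; [exact: span0 | exact: spanD]. Qed.

Lemma span_sum_seq l (I : eqType) (r : seq I) (F : I -> K) :
  (forall i, i \in r -> span W l (F i)) -> span W l (\sum_(i <- r) F i).
Proof. by move=> h; rewrite big_seq; apply: span_sum. Qed.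

Lemma span_cons a l x : span W l x -> span W (a :: l) x.
Proof. by move=> h; exists 0; split; [exact: sf0 | rewrite mul0r subr0]. Qed.

Lemma span_mem l a : a \in l -> span W l a.
Proof.
elim: l => [|b l IH] //; rewrite inE => /orP [/eqP ->|h].
  by exists 1; split; [exact: sf1 | rewrite mul1r subrr; exact: span0].
exact: span_cons (IH h).
Qed.

Lemma span_trans l m x : (forall a, a \in l -> span W m a) -> span W l x -> span W m x.
Proof.
elim: l x => [|a l IH] x hl /=; first by move=> ->; exact: span0.
move=> [c [hc sx]]; have -> : x = (x - c * a) + c * a by rewrite subrK.
apply: spanD; last by apply: spanZ => //; apply: hl; rewrite inE eqxx.
by apply: IH => // b hb; apply: hl; rewrite inE hb orbT.
Qed.

Lemma span_sub l m x : {subset l <= m} -> span W l x -> span W m x.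
Proof. by move=> h; apply: span_trans => a /h; apply: span_mem. Qed.

Lemma span_cat l1 l2 x : span W (l1 ++ l2) x <->
  exists x1 x2, [/\ span W l1 x1, span W l2 x2 & x = x1 + x2].
Proof.
split.
  elim: l1 x => [|a l1 IH] x /=; first by move=> h; exists 0, x; rewrite add0r.
  move=> [c [hc /IH [x1 [x2 [h1 h2 e]]]]]; exists (x1 + c * a), x2; split => //.
    by exists c; split => //; rewrite addrK.
  by rewrite addrAC -e subrK.
move=> [x1 [x2 [h1 h2 ->]]]; apply: spanD.
  by apply: span_sub h1 => z hz; rewrite mem_cat hz.
by apply: span_sub h2 => z hz; rewrite mem_cat hz orbT.
Qed.

Lemma span_map b l x : span W (map (fun y => b * y) l) x <-> exists y, span W l y /\ x = b * y.
Proof.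
split.
  elim: l x => [|a l IH] x /=; first by move=> ->; exists 0; split => //; rewrite mulr0.
  move=> [c [hc /IH [y [hy e]]]]; exists (y + c * a); split.
    by exists c; split => //; rewrite addrK.
  by rewrite mulrDr -e mulrCA subrK.
move=> [y [hy ->]]; elim: l y hy => [|a l IH] y /=; first by move=> ->; rewrite mulr0.
move=> [c [hc hy]]; exists c; split => //.
by have := IH _ hy; rewrite mulrBr mulrCA.
Qed.

Lemma span_mono (W' : K -> Prop) l x : (forall c, W c -> W' c) -> span W l x -> span W' l x.
Proof.
move=> h; elim: l x => [|a l IH] x //= [c [hc sx]]; exists c; split; [exact: h | exact: IH].
Qed.

End Span.


Fixpoint Lm (q : nat) (t : seq K) : seq K :=
  match t with
  | [::] => [:: 1]
  | a :: t' => flatten [seq map (fun y => a ^+ i * y) (Lm q t') | i <- iota 0 q]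
  end.

Lemma span_flat (W : K -> Prop) (hW : is_subfield W) a L (r : seq nat) x : uniq r ->
  span W (flatten [seq map (fun y => a ^+ i * y) L | i <- r]) x <->
  exists v : nat -> K, (forall i, span W L (v i)) /\ x = \sum_(i <- r) a ^+ i * v i.
Proof.
elim: r x => [|i r IH] x ur /=.
  split; first by move=> ->; exists (fun _ => 0); split => [i|]; [exact: span0|rewrite big_nil].
  by move=> [v [_ ->]]; rewrite big_nil.
move: ur => /andP [ir ur].
rewrite span_cat //; split.
  move=> [x1 [x2 [/span_map [y [hy ->]] /(IH _ ur) [v [hv ->]] ->]]].
  exists (fun k => if k == i then y else v k); split; first by move=> k; case: eqP.
  rewrite big_cons eqxx; congr (_ + _); apply: eq_big_seq => k hk.
  by case: eqP => // ek; move: ir; rewrite -ek hk.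
move=> [v [hv ->]]; rewrite big_cons; exists (a ^+ i * v i), (\sum_(j <- r) a ^+ j * v j); split => //.
  by apply/span_map; exists (v i).
by apply/(IH _ ur); exists v.
Qed.

Section FinSpan.
Variable n : nat.
Local Notation q := (p ^ n)%N.
Local Notation F := (Kp n).
Let hF := Kpow_sf n.
Lemma q_gt0 : (0 < q)%N. Proof. by rewrite expn_gt0 p_gt0. Qed.

Lemma monoZ a t k u : (k < q)%N -> span F (Lm q t) u -> span F (Lm q (a :: t)) (a ^+ k * u).
Proof.
move=> hk hu; apply: (@span_sub F hF (map (fun y => a ^+ k * y) (Lm q t))).
  move=> z hz /=; apply/flattenP; exists (map (fun y => a ^+ k * y) (Lm q t)) => //.
  by apply/mapP; exists k => //; rewrite mem_iota add0n hk.
by apply/span_map; exists u.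
Qed.

Lemma Lm_F t c : F c -> span F (Lm q t) c.
Proof.
elim: t c => [|a t IH] c hc /=; first by exists c; split => //; rewrite mulr1 subrr.
suff : span F (Lm q (a :: t)) (a ^+ 0 * c) by rewrite expr0 mul1r.
by apply: monoZ; [exact: q_gt0 | exact: IH].
Qed.

Lemma Lm_mul t x y : span F (Lm q t) x -> span F (Lm q t) y -> span F (Lm q t) (x * y).
Proof.
elim: t x y => [|a t IH] x y.
  move=> [c [hc /= ex]] [d [hd /= ey]]; exists (c * d); split; first exact: sfM.
  move/eqP: ex; rewrite subr_eq0 mulr1 => /eqP ->.
  move/eqP: ey; rewrite subr_eq0 mulr1 => /eqP ->; by rewrite mulr1 subrr.
move=> /(span_flat hF _ _ _ (iota_uniq 0 q)) [v [hv ->]].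
move=> /(span_flat hF _ _ _ (iota_uniq 0 q)) [w [hw ->]].
rewrite mulr_suml; apply: span_sum_seq => // i; rewrite mem_iota add0n => /andP [_ hi].
rewrite mulr_sumr; apply: span_sum_seq => // j; rewrite mem_iota add0n => /andP [_ hj].
rewrite mulrACA -exprD.
have [hij|hij] := ltnP (i + j) q; first by apply: monoZ => //; apply: IH.
rewrite -(subnK hij) exprD -mulrA; apply: monoZ.
  by move: hi hj hij; clear; lia.
apply: spanZ => //; last exact: IH.
by exists a.
Qed.

Lemma Lm_sf t : is_subfield (span F (Lm q t)).
Proof.
split.
- exact: span0.
- by apply: Lm_F; apply: sf1.
- by move=> x y; apply: spanB.
- exact: Lm_mul.
- move=> x hx; have [->|x0] := eqVneq x 0; first by rewrite invr0; apply: span0.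
  have -> : x^-1 = x^-1 ^+ q * x ^+ q.-1.
    have e : x ^+ q = x * x ^+ q.-1 by rewrite -exprS prednK // q_gt0.
    by rewrite exprVn e invfM -mulrA mulVf ?mulr1 // expf_neq0.
  apply: Lm_mul; first by apply: Lm_F; exists x^-1.
  elim: q.-1 => [|k IHk]; first by rewrite expr0; apply: Lm_F; apply: sf1.
  by rewrite exprS; apply: Lm_mul.
Qed.

Lemma Lm_mem t a : a \in t -> span F (Lm q t) a.
Proof.
elim: t => [|b t IH] //; rewrite inE => /orP [/eqP ->|h].
  case: (ltnP 1 q) => hq.
    suff : span F (Lm q (b :: t)) (b ^+ 1 * 1) by rewrite expr1 mulr1.
    by apply: monoZ => //; apply: Lm_F; apply: sf1.
  apply: Lm_F; exists b; have -> : q = 1%N by apply/eqP; rewrite eqn_leq hq q_gt0.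
  by rewrite expr1.
suff : span F (Lm q (b :: t)) (b ^+ 0 * a) by rewrite expr0 mul1r.
by apply: monoZ; [exact: q_gt0 | exact: IH].
Qed.


Lemma fin_span : fin_gen_over (@perfect_core K p) -> exists l, forall x, span F l x.
Proof.
move=> [s hs]; exists (Lm q s) => x.
apply: (gen_field_min (Lm_sf s)) (hs x) => y [hy|hy]; last exact: Lm_mem.
by apply: Lm_F; apply: hy.
Qed.
End FinSpan.


Definition Flin (A : K -> Prop) (G : K -> K) := forall a x, A a -> G (a * x) = a * G x.

Lemma ad_Flin (A : K -> Prop) (b : K) (G : K -> K) : Flin A G -> Flin A (commb b G).
Proof. move=> h a x ha; rewrite /commb (h a x ha) (mulrCA b a x) (h a (b * x) ha); ring. Qed.

Lemma ad_comm (a b : K) (G : K -> K) : commb a (commb b G) = commb b (commb a G).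
Proof. apply: functional_extensionality => x; rewrite /commb mulrCA; ring. Qed.

Lemma ad_zero (b : K) : commb b (fun _ : K => 0) = (fun _ => 0).
Proof. by apply: functional_extensionality => x; rewrite /commb mulr0 subr0. Qed.

Lemma iter_zero (b : K) m : iter m (commb b) (fun _ : K => 0) = (fun _ => 0).
Proof. by elim: m => //= m ->; apply: ad_zero. Qed.

Lemma iter_comm (a b : K) m (G : K -> K) : commb a (iter m (commb b) G) = iter m (commb b) (commb a G).
Proof. by elim: m => //= m <-; rewrite ad_comm. Qed.

Section FinOrder.
Variable n : nat.
Local Notation q := (p ^ n)%N.
Local Notation F := (Kp n).
Let hF := Kpow_sf n.

Lemma iter_big (G : K -> K) t k : Flin F G -> (q <= k)%N -> iter k (commb t) G = (fun _ => 0).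
Proof.
move=> hG hk; rewrite -(subnK hk) iterD.
have -> : iter q (commb t) G = (fun _ => 0).
  apply: functional_extensionality => x; rewrite iter_pn /commb hG ?subrr //.
  by exists t.
exact: iter_zero.
Qed.

Lemma ad_decomp (G : K -> K) (l : seq K) (P : (K -> K) -> Prop) :
  additive G -> Flin F G ->
  P (fun _ => 0) -> (forall H1 H2, P H1 -> P H2 -> P (fun x => H1 x + H2 x)) ->
  (forall c H, F c -> P H -> P (fun x => c * H x)) ->
  (forall a, a \in l -> P (commb a G)) -> forall b, span F l b -> P (commb b G).
Proof.
move=> aG lG P0 PD PZ hl; elim: l hl => [|a l IH] hl b /=.
  move=> ->; have -> : commb 0 G = (fun _ => 0).
    by apply: functional_extensionality => x; rewrite /commb !mul0r (add0 aG) subrr.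
  exact: P0.
move=> [c [hc hb]].
have -> : commb b G = (fun x => commb (b - c * a) G x + c * commb a G x).
  apply: functional_extensionality => x.
  have e : (b - c * a) * x = b * x - c * (a * x) by ring.
  rewrite /commb e (addB aG) (lG _ _ hc); ring.
apply: PD; first by apply: IH => // z hz; apply: hl; rewrite inE hz orbT.
by apply: PZ => //; apply: hl; rewrite inE eqxx.
Qed.

Variable s : seq K.
Hypothesis hs : forall x, span F s x.
Variable D : K -> K.
Hypothesis aD : additive D.
Hypothesis lD : Flin F D.

Fixpoint Gl (k : nat -> nat) (j : nat) : K -> K :=
  match j with
  | 0 => D
  | j'.+1 => iter (k j') (commb s`_j') (Gl k j')
  end.

Lemma Gl_prop k j : additive (Gl k j) /\ Flin F (Gl k j).
Proof.
elim: j => [|j [IH1 IH2]] //=; elim: (k j) => [|m [IHm1 IHm2]] //=.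
by split; [apply: commb_add | apply: ad_Flin].
Qed.

Lemma Gl_ext k k' j : (forall i, (i < j)%N -> k i = k' i) -> Gl k j = Gl k' j.
Proof.
elim: j => [|j IH] h //=; rewrite h // IH // => i hi; apply: h; exact: ltnW.
Qed.

Lemma Gl_zero k j i : (i < j)%N -> (q <= k i)%N -> Gl k j = (fun _ => 0).
Proof.
elim: j => [|j IH] //= hi hk; rewrite ltnS leq_eqVlt in hi.
case/orP: hi => [/eqP ei|hi]; first by rewrite ei in hk; apply: iter_big => //; case: (Gl_prop k j).
by rewrite IH // iter_zero.
Qed.

Definition incr (k : nat -> nat) i := fun m => (k m + (m == i))%N.

Lemma Gl_incr k j i : (i < j)%N -> commb s`_i (Gl k j) = Gl (incr k i) j.
Proof.
elim: j => [|j IH] //= hi; rewrite ltnS leq_eqVlt in hi.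
case/orP: hi => [/eqP ei|hi].
  rewrite ei /incr eqxx addn1 /= (@Gl_ext (incr k j) k) // => m hm.
  by rewrite /incr (ltn_eqF hm) addn0.
rewrite iter_comm IH // /incr.
by rewrite (gtn_eqF hi) addn0.
Qed.

Local Notation d := (size s).
Definition meas (k : nat -> nat) := (\sum_(i < d) (q.-1 - k i))%N.

Lemma meas_term (k : nat -> nat) (i : 'I_d) : (q.-1 - k i <= meas k)%N.
Proof. by rewrite /meas (bigD1 i) //= leq_addr. Qed.

Lemma meas_incr (k : nat -> nat) (i : 'I_d) : (k i < q.-1)%N -> (meas (incr k i)).+1 = meas k.
Proof.
move=> hk; rewrite /meas (bigD1 i) //= [in RHS](bigD1 i) //= /incr eqxx addn1.
rewrite -addSn; congr (_ + _)%N; first by move: hk; clear; lia.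
apply: eq_bigr => j hj; have e : (nat_of_ord j == nat_of_ord i) = false := negbTE hj.
by rewrite e addn0.
Qed.

Lemma Gl_order M : forall k, (meas k <= M)%N -> dord M (Gl k d).
Proof.
have hmem : forall a, a \in s -> exists i : 'I_d, a = s`_i.
  move=> a ha; have hi : (index a s < d)%N by rewrite index_mem.
  exists (Ordinal hi).
  by rewrite /= nth_index.
elim: M => [|M IH] k hk /=.
  move=> b; apply: (ad_decomp (l := s) (P := fun H => forall x, H x = 0) (Gl_prop k d).1 (Gl_prop k d).2) => //.
  - by move=> H1 H2 h1 h2 x; rewrite h1 h2 addr0.
  - by move=> c H _ h x; rewrite h mulr0.
  - move=> a /hmem [i ->] x; rewrite Gl_incr ?ltn_ord // (@Gl_zero _ _ i) ?ltn_ord //.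
    have := meas_term k i; rewrite leqn0 in hk; rewrite (eqP hk) leqn0 subn_eq0 /incr eqxx addn1.
    by move=> h; rewrite -(prednK (q_gt0 n)) ltnS.
move=> b; apply: (ad_decomp (l := s) (P := dord M) (Gl_prop k d).1 (Gl_prop k d).2) => //.
- exact: do_zero.
- by move=> H1 H2; apply: do_add.
- by move=> c H _; apply: do_scal.
- move=> a /hmem [i ->]; rewrite Gl_incr ?ltn_ord //.
  case: (ltnP (k i) q.-1) => hki.
    by apply: IH; rewrite -ltnS meas_incr.
  rewrite (@Gl_zero _ _ i) ?ltn_ord; first exact: do_zero.
  by []. by rewrite /incr eqxx addn1 -(prednK (q_gt0 n)) ltnS.
Qed.

Lemma Flin_order : dord (d * q.-1) D.
Proof.
have -> : D = Gl (fun _ => 0%N) d by move: d; elim => //=.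
apply: Gl_order; rewrite /meas big_const_ord subn0.
by rewrite iter_addn_0 mulnC.
Qed.
End FinOrder.


Definition ext n (j : 'I_n) (v : K) (f : 'I_n.-1 -> K) : 'I_n -> K :=
  fun i => match unlift j i with None => v | Some k => f k end.

Lemma ext_j n (j : 'I_n) v f : ext j v f j = v.
Proof. by rewrite /ext unlift_none. Qed.
Lemma ext_lift n (j : 'I_n) v f k : ext j v f (lift j k) = f k.
Proof. by rewrite /ext liftK. Qed.

Lemma sum_ext n (j : 'I_n) v f (e : 'I_n -> K) :
  \sum_i ext j v f i * e i = v * e j + \sum_k f k * e (lift j k).
Proof.
rewrite (bigD1_ord j) //= ext_j; congr (_ + _); apply: eq_bigr => k _; by rewrite ext_lift.
Qed.

Lemma sum_ext0 n v (f : 'I_n -> K) (e : 'I_n.+1 -> K) :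
  \sum_i ext (ord0 : 'I_n.+1) v f i * e i = v * e ord0 + \sum_k f k * e (lift ord0 k).
Proof. exact: (sum_ext ord0 v f e). Qed.

Lemma sum_ext0' n v (f : 'I_n -> K) (c : 'I_n.+1 -> K) :
  \sum_i c i * ext (ord0 : 'I_n.+1) v f i = c ord0 * v + \sum_k c (lift ord0 k) * f k.
Proof. by rewrite big_ord_recl ext_j; congr (_ + _); apply: eq_bigr => k _; rewrite ext_lift. Qed.

Section Basis.
Variable W : K -> Prop.
Hypothesis hW : is_subfield W.

Definition spanI n (e : 'I_n -> K) (x : K) :=
  exists c : 'I_n -> K, (forall j, W (c j)) /\ x = \sum_j c j * e j.
Definition indepI n (e : 'I_n -> K) :=
  forall c : 'I_n -> K, (forall j, W (c j)) -> \sum_j c j * e j = 0 -> forall j, c j = 0.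

Lemma spanI_D n (e : 'I_n -> K) x y : spanI e x -> spanI e y -> spanI e (x + y).
Proof.
move=> [c [hc ->]] [d [hd ->]]; exists (fun j => c j + d j); split.
  by move=> j; apply: sfD.
by rewrite -big_split; apply: eq_bigr => j _; rewrite mulrDl.
Qed.

Lemma spanI_Z n (e : 'I_n -> K) k x : W k -> spanI e x -> spanI e (k * x).
Proof.
move=> hk [c [hc ->]]; exists (fun j => k * c j); split; first by move=> j; apply: sfM.
by rewrite mulr_sumr; apply: eq_bigr => j _; rewrite mulrA.
Qed.

Lemma spanI_0 n (e : 'I_n -> K) : spanI e 0.
Proof. exists (fun _ => 0); split; first by move=> j; apply: sf0. by rewrite big1 // => j _; rewrite mul0r. Qed.

Lemma spanI_e n (e : 'I_n -> K) j : spanI e (e j).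
Proof.
exists (fun i => (i == j)%:R); split; first by move=> i; apply: sf_nat.
rewrite (bigD1 j) //= eqxx mul1r big1 ?addr0 // => i hi; by rewrite (negbTE hi) mul0r.
Qed.

Lemma spanI_sum n (e : 'I_n -> K) m (F : 'I_m -> K) : (forall i, spanI e (F i)) -> spanI e (\sum_i F i).
Proof. move=> h; apply: (big_ind (spanI e)) => //; [exact: spanI_0 | exact: spanI_D]. Qed.

Lemma spanI_ext n (e : 'I_n.+1 -> K) x :
  spanI e x <-> exists c0, W c0 /\ spanI (fun k => e (lift ord0 k)) (x - c0 * e ord0).
Proof.
split.
  move=> [c [hc ->]]; exists (c ord0); split => //; exists (fun k => c (lift ord0 k)); split => //.
  by rewrite big_ord_recl addrC addKr.
move=> [c0 [h0 [c [hc e1]]]]; exists (ext ord0 c0 c); split.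
  by move=> i; rewrite /ext; case: unlift.
by rewrite sum_ext0 -e1 addrC subrK.
Qed.

Lemma extract (l : seq K) : exists n (e : 'I_n -> K),
  indepI e /\ forall x, span W l x <-> spanI e x.
Proof.
elim: l => [|a l [n [e [ie he]]]].
  exists 0%N, (fun _ => 0); split; first by move=> c _ _ [].
  by move=> x /=; split; [move=> ->; exact: spanI_0 | move=> [c [_ ->]]; rewrite big_ord0].
have [ha|ha] := classic (spanI e a).
  exists n, e; split => // x; split.
    move=> [c [hc /he hx]]; rewrite -(subrK (c * a) x); apply: spanI_D => //.
    exact: spanI_Z.
  by move/he => hx; apply: span_cons.
exists n.+1, (ext ord0 a e); split.
  move=> c hc; rewrite sum_ext0' => hs.
  have c0 : c ord0 = 0.
    apply/eqP; apply/negP => /negP c0; apply: ha.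
    have hs' : \sum_k c (lift ord0 k) * e k = - (c ord0 * a).
      by apply/eqP; rewrite -subr_eq0 opprK addrC hs.
    have -> : a = (- (c ord0)^-1) * \sum_k c (lift ord0 k) * e k.
      by rewrite hs' mulrNN mulrA mulVf ?mul1r.
    apply: spanI_Z; first by apply: sfN => //; apply: sfV.
    by exists (fun k => c (lift ord0 k)).
  move: hs; rewrite c0 mul0r add0r => hs.
  have hl : forall k, c (lift ord0 k) = 0.
    apply: ie => //; rewrite -hs; apply: eq_bigr => k _; by rewrite ext_lift.
  move=> j; case: (unliftP ord0 j) => [k ->|->] //.
move=> x; rewrite spanI_ext /=; split.
  move=> [c0 [h0 /he hx]]; exists c0; split => //; rewrite ext_j.
  by move: hx; congr (spanI _ _); apply: functional_extensionality => k; rewrite ext_lift.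
move=> [c0 [h0 hx]]; exists c0; split => //; apply/he.
move: hx; rewrite ext_j; congr (spanI _ _); apply: functional_extensionality => k; by rewrite ext_lift.
Qed.


Section Coord.
Variable n : nat.
Variable e : 'I_n -> K.
Hypothesis ie : indepI e.
Hypothesis se : forall x, spanI e x.

Definition coord (j : 'I_n) (x : K) : K :=
  epsilon (inhabits (fun _ : 'I_n => 0))
    (fun c : 'I_n -> K => (forall j, W (c j)) /\ x = \sum_j c j * e j) j.

Lemma coord_spec x : (forall j, W (coord j x)) /\ x = \sum_j coord j x * e j.
Proof. exact: (epsilon_spec (inhabits (fun _ : 'I_n => 0)) _ (se x)). Qed.

Lemma coord_W j x : W (coord j x). Proof. by case: (coord_spec x). Qed.
Lemma coord_eq x : x = \sum_j coord j x * e j. Proof. by case: (coord_spec x). Qed.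

Lemma coord_uniq x (c : 'I_n -> K) : (forall j, W (c j)) -> x = \sum_j c j * e j ->
  forall j, coord j x = c j.
Proof.
move=> hc hx j; apply/eqP; rewrite -subr_eq0; apply/eqP; move: j.
apply: ie; first by move=> j; apply: sfB => //; apply: coord_W.
rewrite (eq_bigr (fun j => coord j x * e j - c j * e j)); last by move=> j _; rewrite mulrBl.
by rewrite sumrB -coord_eq -hx subrr.
Qed.

Lemma coord_add j : additive (coord j).
Proof.
move=> x y; apply: (coord_uniq (c := fun j => coord j x + coord j y)).
  by move=> i; apply: sfD => //; apply: coord_W.
rewrite (eq_bigr (fun j => coord j x * e j + coord j y * e j)); last by move=> i _; rewrite mulrDl.
by rewrite big_split -!coord_eq.
Qed.

Lemma coord_lin j a x : W a -> coord j (a * x) = a * coord j x.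
Proof.
move=> ha; apply: (coord_uniq (c := fun j => a * coord j x)).
  by move=> i; apply: sfM => //; apply: coord_W.
by rewrite {1}(coord_eq x) mulr_sumr; apply: eq_bigr => i _; rewrite mulrA.
Qed.

Lemma coord_e j k : coord j (e k) = (k == j)%:R.
Proof.
apply: (coord_uniq (c := fun j => (k == j)%:R)); first by move=> i; apply: sf_nat.
rewrite (bigD1 k) //= eqxx mul1r big1 ?addr0 // => i hi.
by rewrite eq_sym (negbTE hi) mul0r.
Qed.

Lemma coord_centr x : (forall j, x * coord j 1 = coord j x) -> W x.
Proof.
move=> h; have [j hj] : exists j, coord j 1 != 0.
  apply: NNPP => hn; move: (coord_eq 1); rewrite big1; first by move/eqP; rewrite oner_eq0.
  move=> j _; have : ~ (coord j 1 != 0) by move=> hj; apply: hn; exists j.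
  by move/negP; rewrite negbK => /eqP ->; rewrite mul0r.
have -> : x = coord j x / coord j 1 by rewrite -h mulfK.
by apply: (sfM hW); [apply: coord_W | apply: (sfV hW); apply: coord_W].
Qed.
End Coord.

End Basis.


Section Density.
Variable A : (K -> K) -> Prop.
Hypothesis hAadd : forall E, A E -> additive E.
Hypothesis hAmul : forall c, A (fun x => c * x).
Hypothesis hAD : forall E F, A E -> A F -> A (fun x => E x + F x).
Hypothesis hAC : forall E F, A E -> A F -> A (fun x => E (F x)).

Definition Wc : K -> Prop := fun c => forall E, A E -> forall y, c * E y = E (c * y).

Lemma Wc_sf : is_subfield Wc.
Proof.
split.
- by move=> E hE y; rewrite !mul0r (add0 (hAadd hE)).
- by move=> E hE y; rewrite !mul1r.
- by move=> a b ha hb E hE y; rewrite mulrBl ha // hb // -(addB (hAadd hE)) mulrBl.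
- by move=> a b ha hb E hE y; rewrite -mulrA hb // ha // mulrA.
- move=> a ha E hE y; have [->|a0] := eqVneq a 0; first by rewrite invr0 !mul0r add0 //; apply: hAadd.
  apply: (mulfI a0); rewrite mulrA divff // mul1r ha // mulrA divff // mul1r //.
Qed.

Lemma A_scal c E : A E -> A (fun x => c * E x).
Proof. by move=> hE; apply: (hAC (hAmul c) hE). Qed.

Lemma density n : forall (e : 'I_n -> K) m,
  (forall E, A E -> (forall j, E (e j) = 0) -> E m = 0) -> spanI Wc e m.
Proof.
elim: n => [|n IH] e m h.
  have := h _ (hAmul 1) (fun j => match j with Ordinal _ hj => False_ind _ (notF hj) end).
  rewrite mul1r => ->; apply: spanI_0; exact: Wc_sf.
apply/spanI_ext.
set v := e ord0; set e' := fun k => e (lift ord0 k).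
have killall : forall E, A E -> (forall k, E (e' k) = 0) -> E v = 0 -> forall j, E (e j) = 0.
  by move=> E _ h1 h2 j; case: (unliftP ord0 j) => [k ->|->] //; apply: h1.
have [allI|exI] := classic (forall E, A E -> (forall k, E (e' k) = 0) -> E v = 0).
  exists 0; split; first exact: sf0 Wc_sf.
  rewrite mul0r subr0; apply: IH => E hE hk; apply: h => //; apply: killall => //.
  exact: allI.
have [E0 [hE0 [k0 w0]]] : exists E0, A E0 /\ (forall k, E0 (e' k) = 0) /\ E0 v <> 0.
  apply: NNPP => hn; apply: exI => E hE hk; apply: NNPP => hv; apply: hn; exists E; split => //.
set c := E0 m / E0 v.
have cl1 : forall E, A E -> (forall k, E (e' k) = 0) -> E m = c * E v.
  move=> E hE hk.
  have hE' : A (fun x => E x + (- (E v / E0 v)) * E0 x) by apply: hAD => //; apply: A_scal.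
  have := h _ hE'; rewrite /c; move=> H.
  have : E m + - (E v / E0 v) * E0 m = 0.
    apply: H => j.
    have := @killall (fun x => E x + - (E v / E0 v) * E0 x) hE'; apply => /=.
      by move=> k; rewrite hk k0 mulr0 addr0.
    by rewrite mulNr divfK ?subrr //; apply/eqP.
  move/eqP; rewrite addr_eq0 => /eqP ->; rewrite mulNr opprK; ring.
have cW : Wc c.
  move=> B hB y.
  have hEy : A (fun x => B (y / E0 v * E0 x)) by apply: hAC => //; apply: A_scal.
  have := cl1 _ hEy; rewrite /= divfK; last by apply/eqP.
  move=> H; rewrite -H; last first.
    by move=> k; rewrite k0 mulr0; apply: add0; apply: hAadd.
  by congr B; rewrite /c; ring.
exists c; split => //; apply: IH => E hE hk.
have aE := hAadd hE.
by rewrite addB // -cW // cl1 // subrr.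
Qed.

Lemma A_sum m (G : 'I_m -> K -> K) : (forall j, A (G j)) -> A (fun x => \sum_j G j x).
Proof.
elim: m G => [|m IH] G hG.
  have -> : (fun x => \sum_(j < 0) G j x) = (fun x => 0 * x).
    by apply: functional_extensionality => x; rewrite big_ord0 mul0r.
  exact: hAmul.
have -> : (fun x => \sum_(j < m.+1) G j x) =
          (fun x => (fun y => \sum_(j < m) G (widen_ord (leqnSn m) j) y) x + G ord_max x).
  by apply: functional_extensionality => x; rewrite big_ord_recr.
by apply: hAD => //; apply: IH.
Qed.

Lemma add_sum E (I : Type) (r : seq I) (F : I -> K) : additive E ->
  E (\sum_(i <- r) F i) = \sum_(i <- r) E (F i).
Proof. by move=> hE; apply: (big_morph E hE (add0 hE)). Qed.

Lemma JB (F : K -> Prop) (l : seq K) : (forall c, F c -> Wc c) -> (forall x, span F l x) ->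
  forall E, additive E -> (forall c x, Wc c -> E (c * x) = c * E x) -> A E.
Proof.
move=> hFW hl E aE lE.
have [n [e [ie he]]] := extract Wc_sf l.
have se : forall x, spanI Wc e x by move=> x; apply/he; apply: span_mono (hl x).
have hex : forall j, exists a, A a /\ forall k, a (e k) = (k == j)%:R.
  move=> j.
  have [E1 [hE1 [h1 h2]]] : exists E1, A E1 /\ (forall k, E1 (e (lift j k)) = 0) /\ E1 (e j) <> 0.
    apply: NNPP => hn.
    have : spanI Wc (fun k => e (lift j k)) (e j).
      apply: density => E1 hE1 hk; apply: NNPP => hv; apply: hn; exists E1; split => //.
    move=> [c [hc hs]].
    have hz : ext j (-1) c j = 0.
      apply: ie.
        move=> i; rewrite /ext; case: unlift => [k|] //; apply: (sfN Wc_sf); exact: (sf1 Wc_sf).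
      by rewrite sum_ext -hs mulN1r addNr.
    by move: hz; rewrite ext_j => /eqP; rewrite oppr_eq0 oner_eq0.
  exists (fun x => (E1 (e j))^-1 * E1 x); split; first exact: A_scal.
  move=> k; case: (unliftP j k) => [k' ->|->].
    by rewrite h1 mulr0 eq_sym (negbTE (neq_lift j k')).
  by rewrite eqxx mulVf //; apply/eqP.
have [a ha] : exists a : 'I_n -> K -> K, forall j, A (a j) /\ forall k, a j (e k) = (k == j)%:R.
  exists (fun j => epsilon (inhabits (fun x : K => x)) (fun a => A a /\ forall k, a (e k) = (k == j)%:R)).
  by move=> j; apply: (epsilon_spec (inhabits (fun x : K => x)) _ (hex j)).
have -> : E = (fun x => \sum_j (fun j y => E (e j) * a j y) j x).
  apply: functional_extensionality => x.
  rewrite {1}(coord_eq se x) add_sum //.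
  have -> : \sum_j E (e j) * a j x = \sum_j E (e j) * \sum_k coord Wc e k x * a j (e k).
    apply: eq_bigr => j _; congr (_ * _).
    rewrite {1}(coord_eq se x) add_sum; last exact: hAadd (ha j).1.
    apply: eq_bigr => k _.
    by symmetry; apply: (coord_W se k x); exact: (ha j).1.
  apply: eq_bigr => j _; rewrite lE; last exact: coord_W.
  rewrite (bigD1 j) //= (ha j).2 eqxx mulr1 big1; first by rewrite addr0 mulrC.
  by move=> k hk; rewrite (ha j).2 (negbTE hk) mulr0.
by apply: A_sum => j; apply: A_scal; exact: (ha j).1.
Qed.
End Density.


Lemma choiceI n (P : 'I_n -> ('I_n -> K) -> Prop) : forall m (Q : 'I_n -> ('I_m -> K) -> Prop),
  (forall i, exists a, Q i a) -> exists A : 'I_n -> 'I_m -> K, forall i, Q i (A i).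
Proof.
move=> m Q h; exists (fun i => epsilon (inhabits (fun _ : 'I_m => 0)) (Q i)).
by move=> i; apply: epsilon_spec.
Qed.

Lemma dim_le (T : Type) (S : K -> Prop) (hS : is_subfield S) n m
  (e : 'I_n -> T -> K) (f : 'I_m -> T -> K) :
  (forall c, (forall j, S (c j)) -> (forall t, \sum_j c j * e j t = 0) -> forall j, c j = 0) ->
  (forall i, exists a : 'I_m -> K, (forall j, S (a j)) /\ forall t, e i t = \sum_j a j * f j t) ->
  (forall i, exists b : 'I_n -> K, (forall j, S (b j)) /\ forall t, f i t = \sum_j b j * e j t) ->
  (n <= m)%N.
Proof.
move=> ie hef hfe.
have [A hA] := choiceI (fun _ _ => True) hef.
have [B hB] := choiceI (fun _ _ => True) hfe.
pose MA := \matrix_(i < n, j < m) A i j.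
pose MB := \matrix_(i < m, j < n) B i j.
have hM : MA *m MB = 1%:M.
  apply/matrixP => i k; rewrite !mxE.
  pose c := fun k => \sum_j A i j * B j k - (i == k)%:R.
  have hc : forall k, c k = 0.
    apply: ie.
      move=> k'; apply: (sfB hS); last exact: sf_nat.
      apply: sf_sum => // j _; apply: (sfM hS); [exact: (hA i).1 | exact: (hB j).1].
    move=> t; rewrite /c.
    rewrite (eq_bigr (fun k => \sum_j A i j * B j k * e k t - (i == k)%:R * e k t)); last first.
      by move=> k' _; rewrite mulrBl mulr_suml.
    rewrite sumrB exchange_big /=.
    rewrite (eq_bigr (fun j => A i j * f j t)); last first.
      by move=> j _; rewrite (hB j).2 mulr_sumr; apply: eq_bigr => k' _; rewrite mulrA.
    rewrite -(hA i).2 (bigD1 i) //= eqxx mul1r big1 ?addr0 ?subrr //.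
    by move=> k' hk; rewrite eq_sym (negbTE hk) mul0r.
  rewrite (eq_bigr (fun j => A i j * B j k)); last by move=> j _; rewrite !mxE.
  by have := hc k; rewrite /c => /eqP; rewrite subr_eq0 => /eqP.
have := mxrankM_maxl MA MB; rewrite hM mxrank1 => h.
exact: leq_trans h (rank_leq_col MA).
Qed.


Section Assembly.
Hypothesis hfg : fin_gen_over (@perfect_core K p).

Lemma order_of n E : additive E -> Flin (Kp n) E -> exists m, dord m E.
Proof. move=> aE lE; have [s hs] := fin_span n hfg. exists (size s * (p ^ n).-1)%N. exact: (Flin_order hs aE lE). Qed.

Lemma Flin_sub (A B : K -> Prop) E : (forall c, B c -> A c) -> Flin A E -> Flin B E.
Proof. by move=> h lE a x hb; apply: lE; apply: h. Qed.

Lemma Flin_mono n N E : (n <= N)%N -> Flin (Kp n) E -> Flin (Kp N) E.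
Proof. move=> h; apply: Flin_sub => c; exact: Kpow_mono. Qed.

Lemma Diff_intro (A : K -> Prop) E : additive E -> Flin A E -> (exists n, Flin (Kp n) E) -> Diff A E.
Proof. by move=> aE lE [n ln]; split => //; apply: order_of ln. Qed.

Lemma Diff_elim (A : K -> Prop) E : Diff A E -> [/\ additive E, Flin A E & exists n, Flin (Kp n) E].
Proof.
move=> [[aE lE] [m hm]]; split => //; exists m => _ x [y ->]; exact: do_lin hm y x.
Qed.

Lemma Flin_gen2 (A B : K -> Prop) E : additive E -> Flin A E -> Flin B E -> Flin (compositum A B) E.
Proof.
move=> aE lA lB a x ha; apply: (lin_gen aE _ ha) => c [hc|hc] y; [exact: lA | exact: lB].
Qed.

Lemma Diff_mul (A : K -> Prop) c : Diff A (fun x => c * x).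
Proof.
apply: Diff_intro; first by move=> x y; rewrite mulrDr.
  by move=> a x _; rewrite mulrCA.
by exists 0%N => a x _; rewrite mulrCA.
Qed.

Lemma Diff_add (A : K -> Prop) E F : Diff A E -> Diff A F -> Diff A (fun x => E x + F x).
Proof.
move=> /Diff_elim [aE lE [n nE]] /Diff_elim [aF lF [m mF]]; apply: Diff_intro.
- by move=> x y; rewrite aE aF addrACA.
- by move=> a x ha; rewrite lE // lF // mulrDr.
exists (maxn n m) => a x ha.
by rewrite (Flin_mono (leq_maxl n m) nE) // (Flin_mono (leq_maxr n m) mF) // mulrDr.
Qed.

Lemma Diff_comp (A : K -> Prop) E F : Diff A E -> Diff A F -> Diff A (fun x => E (F x)).
Proof.
move=> /Diff_elim [aE lE [n nE]] /Diff_elim [aF lF [m mF]]; apply: Diff_intro.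
- by move=> x y; rewrite aF aE.
- by move=> a x ha; rewrite lF // lE.
exists (maxn n m) => a x ha.
by rewrite (Flin_mono (leq_maxr n m) mF) // (Flin_mono (leq_maxl n m) nE).
Qed.

Lemma Diff_sub (A B : K -> Prop) E : (forall c, B c -> A c) -> Diff A E -> Diff B E.
Proof. by move=> h /Diff_elim [aE lE hn]; apply: Diff_intro => //; apply: Flin_sub lE. Qed.

Lemma core_Kp n c : perfect_core p c -> Kp n c. Proof. by move=> h; apply: h. Qed.


Lemma basis_over (C : K -> Prop) n : is_subfield C -> (forall c, Kp n c -> C c) ->
  exists m (e : 'I_m -> K), indepI C e /\ forall x, spanI C e x.
Proof.
move=> hC hK; have [l hl] := fin_span n hfg; have [m [e [ie he]]] := extract hC l.
by exists m, e; split => // x; apply/he; apply: span_mono (hl x).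
Qed.

Lemma coord_Diff (C : K -> Prop) n m (e : 'I_m -> K) (hC : is_subfield C)
  (ie : indepI C e) (se : forall x, spanI C e x) (B : K -> Prop) j :
  (forall c, Kp n c -> C c) -> (forall c, B c -> C c) -> Diff B (coord C e j).
Proof.
move=> hK hB; apply: Diff_intro; first exact: coord_add.
  by move=> a x ha; apply: coord_lin => //; apply: hB.
by exists n => a x ha; apply: coord_lin => //; apply: hK.
Qed.

Section Alg.
Variable D : (K -> K) -> Prop.
Hypothesis hD : admissible_alg p D.
Local Notation An n := (alg_level p D n).
Local Notation Wt := (tower_of_alg p D).

Lemma D_Diff E : D E -> Diff (perfect_core p) E.
Proof. by case: hD => _ _ _ _ h; apply: h. Qed.

Lemma An_add n E : An n E -> additive E.
Proof. by move=> [_ /Diff_elim []]. Qed.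
Lemma An_mul n c : An n (fun x => c * x).
Proof. by split; [case: hD => h _ _ _ _; apply: h | apply: Diff_mul]. Qed.
Lemma An_D n E F : An n E -> An n F -> An n (fun x => E x + F x).
Proof. move=> [h1 h2] [h3 h4]; split; [by case: hD => _ h _ _ _; apply: h | exact: Diff_add]. Qed.
Lemma An_C n E F : An n E -> An n F -> An n (fun x => E (F x)).
Proof. move=> [h1 h2] [h3 h4]; split; [by case: hD => _ _ h _ _; apply: h | exact: Diff_comp]. Qed.

Lemma Wt_sf n : is_subfield (Wt n).
Proof. exact: (Wc_sf (@An_add n)). Qed.

Lemma Kp_Wt n c : Kp n c -> Wt n c.
Proof. by move=> hc E [_ /Diff_elim [_ lE _]] y; rewrite lE. Qed.

Lemma JB_n n E : additive E -> Flin (Wt n) E -> An n E.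
Proof.
move=> aE lE; have [l hl] := fin_span n hfg.
apply: (JB (@An_add n) (@An_mul n) (@An_D n) (@An_C n) (F := Kp n) (l := l) _ hl aE).
  by move=> c hc; apply: Kp_Wt.
by move=> c x hc; apply: lE.
Qed.

Lemma Wt_anti j i : (j <= i)%N -> forall x, Wt i x -> Wt j x.
Proof.
move=> hji x hx E [h1 h2]; apply: hx; split => //.
by apply: Diff_sub h2 => c; apply: Kpow_mono.
Qed.

Lemma tower_part : power_tower p Wt.
Proof.
split; first exact: Wt_sf.
move=> i j hji; apply: functional_extensionality => x; apply: propositional_extensionality; split.
  move=> hx.
  set C := compositum (Wt i) (Kp j).
  have hC : is_subfield C by apply: gen_field_sf.
  have hKC : forall c, Kp j c -> C c by move=> c hc; apply: gen_field_in; right.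
  have [m [e [ie se]]] := basis_over hC hKC.
  apply: (coord_centr hC se) => k.
  have hk : An j (coord C e k).
    split.
      have : An i (coord C e k).
        apply: JB_n; first exact: coord_add.
        by move=> a y ha; apply: coord_lin => //; apply: gen_field_in; left.
      by case.
    exact: (coord_Diff hC ie se k hKC).
  by have := hx _ hk 1; rewrite mulr1.
apply: (gen_field_min (Wt_sf j)) => y [hy|hy].
  exact: Wt_anti hy.
exact: Kp_Wt.
Qed.

Lemma Diff_part : Diff_tower Wt = D.
Proof.
apply: functional_extensionality => E; apply: propositional_extensionality; split.
  move=> [n hE]; have [aE lE [m mE]] := Diff_elim hE.
  have : An (maxn n m) E.
    apply: JB_n => //; apply: Flin_sub lE => c; apply: Wt_anti; exact: leq_maxl.
  by case.
move=> hE; have [aE _ [m mE]] := Diff_elim (D_Diff hE).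
have hA : An m E by split => //; apply: Diff_intro => //; exists m.
exists m; apply: Diff_intro => //; last by exists m.
by move=> a x ha; rewrite ha.
Qed.

Lemma dim_part i n : op_dim (An i) n <-> field_dim (Wt i) n.
Proof.
have hW := Wt_sf i.
have [m [e [ie se]]] := basis_over hW (@Kp_Wt i).
have hphi : forall j, An i (coord (Wt i) e j).
  by move=> j; apply: JB_n; [exact: coord_add | move=> a x ha; exact: coord_lin].
have Tsf : is_subfield (fun _ : K => True) by [].
have phi_span : forall E : K -> K, An i E -> exists c : 'I_m -> K, (forall j : 'I_m, True) /\
    forall x, E x = \sum_j c j * coord (Wt i) e j x.
  move=> E hE; exists (fun j => E (e j)); split => // x.
  rewrite {1}(coord_eq se x) (add_sum _ _ (An_add hE)); apply: eq_bigr => j _.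
  by rewrite [RHS]mulrC; symmetry; apply: (coord_W se j x).
have phi_ind : forall c : 'I_m -> K, (forall j : 'I_m, True) ->
    (forall x, \sum_j c j * coord (Wt i) e j x = 0) -> forall j, c j = 0.
  move=> c _ h j; have := h (e j); rewrite (bigD1 j) //= coord_e // eqxx mulr1 big1 ?addr0 //.
  by move=> k hk; rewrite coord_e // eq_sym (negbTE hk) mulr0.
split.
  move=> [g [hg ig sg]].
  have -> : n = m.
    apply/eqP; rewrite eqn_leq; apply/andP; split.
      apply: (dim_le Tsf (e := g) (f := fun j x => coord (Wt i) e j x)) => //.
      - by move=> c _; apply: ig.
      - by move=> j; apply: phi_span.
      - move=> j; have [c hc] := sg _ (hphi j); by exists c.
    apply: (dim_le Tsf (f := g) (e := fun j x => coord (Wt i) e j x)) => //.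
    - by move=> j; have [c hc] := sg _ (hphi j); by exists c.
    - by move=> j; apply: phi_span.
  by exists e; split.
move=> [f [if_ sf]].
have -> : n = m.
  apply/eqP; rewrite eqn_leq; apply/andP; split.
    apply: (dim_le hW (e := fun j (_ : unit) => f j) (f := fun j (_ : unit) => e j)).
    - by move=> c hc h; apply: if_ => //; apply: h tt.
    - by move=> j; have [c [hc ->]] := se (f j); exists c.
    - by move=> j; have [c [hc ->]] := sf (e j); exists c.
  apply: (dim_le hW (f := fun j (_ : unit) => f j) (e := fun j (_ : unit) => e j)).
  - by move=> c hc h; apply: ie => //; apply: h tt.
  - by move=> j; have [c [hc ->]] := sf (e j); exists c.
  - by move=> j; have [c [hc ->]] := se (f j); exists c.
exists (fun j x => coord (Wt i) e j x); split => //.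
  by move=> c; apply: phi_ind.
by move=> E hE; have [c [_ hc]] := phi_span E hE; exists c.
Qed.
End Alg.

Section Tower.
Variable W : nat -> K -> Prop.
Hypothesis hW : power_tower p W.

Lemma W_sf i : is_subfield (W i). Proof. by case: hW. Qed.
Lemma W_comp i j : (j <= i)%N -> W j = compositum (W i) (Kp j). Proof. by case: hW => _ h; apply: h. Qed.
Lemma Kp_W n c : Kp n c -> W n c.
Proof. by move=> hc; rewrite (W_comp (leqnn n)); apply: gen_field_in; right. Qed.
Lemma W_anti j i : (j <= i)%N -> forall c, W i c -> W j c.
Proof. by move=> h c hc; rewrite (W_comp h); apply: gen_field_in; left. Qed.

Lemma adm_part : admissible_alg p (Diff_tower W).
Proof.
split.
- by move=> c; exists 0%N; apply: Diff_mul.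
- move=> E F [a hE] [b hF]; exists (maxn a b); apply: Diff_add.
    by apply: Diff_sub hE; apply: W_anti; exact: leq_maxl.
  by apply: Diff_sub hF; apply: W_anti; exact: leq_maxr.
- move=> E F [a hE] [b hF]; exists (maxn a b); apply: Diff_comp.
    by apply: Diff_sub hE; apply: W_anti; exact: leq_maxl.
  by apply: Diff_sub hF; apply: W_anti; exact: leq_maxr.
- move=> c E [a hE]; exists a; exact: Diff_comp (Diff_mul _ c) hE.
- move=> E [a hE]; apply: Diff_sub hE => c hc; apply: Kp_W; exact: hc a.
Qed.

Lemma tower_alg_part : tower_of_alg p (Diff_tower W) = W.
Proof.
apply: functional_extensionality => n; apply: functional_extensionality => x.
apply: propositional_extensionality; split.
  move=> hx.
  have [m [e [ie se]]] := basis_over (W_sf n) (@Kp_W n).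
  apply: (coord_centr (W_sf n) se) => k.
  have hk : alg_level p (Diff_tower W) n (coord (W n) e k).
    split; first by exists n; apply: (coord_Diff (W_sf n) ie se k (@Kp_W n)).
    by apply: (coord_Diff (W_sf n) ie se k (@Kp_W n)); apply: Kp_W.
  by have := hx _ hk 1; rewrite mulr1.
move=> hx E [[m hm] hn] y.
have [aE lE _] := Diff_elim hm; have [_ lE' _] := Diff_elim hn.
case: (leqP n m) => hnm.
  symmetry; apply: (Flin_gen2 aE lE lE'); by rewrite -(W_comp hnm).
symmetry; apply: lE; apply: W_anti (ltnW hnm) _ hx.
Qed.
End Tower.

End Assembly.

End Main.

Unset Implicit Arguments.
Theorem mainTheorem5 (K : fieldType) (p : nat) (hp : p \in [pchar K])
    (hfg : fin_gen_over (@perfect_core K p)) :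
  (forall W : nat -> K -> Prop, power_tower p W ->
     admissible_alg p (Diff_tower W) /\ tower_of_alg p (Diff_tower W) = W) /\
  (forall D : (K -> K) -> Prop, admissible_alg p D ->
     power_tower p (tower_of_alg p D) /\ Diff_tower (tower_of_alg p D) = D) /\
  (forall D : (K -> K) -> Prop, admissible_alg p D ->
     forall i n : nat,
       op_dim (alg_level p D i) n <-> field_dim (tower_of_alg p D i) n).
Proof.
split.
  move=> W hW; split. exact (adm_part hp hfg hW). exact (tower_alg_part hp hfg hW).
split.
  move=> D hD; split. exact (tower_part hp hfg hD). exact (Diff_part hp hfg hD).
move=> D hD i n; exact (dim_part hp hfg hD i n).
Qed.
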